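(* Let $X$ be a topological space and $C\subseteq X$. If $C$ is statistically compact, then for every nonthin sequence $(x_n)_{n\in M}$ in $X$ which has no nonthin subsequence statistically convergent in $X$, there exists $N\subseteq M$ with $d(N)=0$ and $x_n\in X\setminus C$ for all $n\in M\setminus N$. Conversely, if $C$ is statistically closed and has this property, then $C$ is statistically compact.
   Context: For $A\subseteq\mathbb{N}$ let $d_n(A)=|A\cap\{1,\dots,n\}|/n$, $\overline{d}(A)=\limsup_n d_n(A)$, $\underline{d}(A)=\liminf_n d_n(A)$, and $d(A)$ their common value when equal. A sequence in $X$ is a map from an infinite subset $M\subseteq\mathbb{N}$ into $X$, written $(x_n)_{n\in M}$; a subsequence is $(x_n)_{n\in N}$ with $N\subseteq M$ infinite. It is nonthin if $\overline{d}(M)>0$. A nonthin sequence $(x_n)_{n\in M}$ is statistically convergent to $a\in X$ if for every open $U\ni a$, $d(\{n\in M:x_n\notin U\})=0$. The statistical closure $\overline{F}^{ST}$ of $F\subseteq X$ is the set of $x\in X$ such that some nonthin sequence in $F$ is statistically convergent to $x$; $F$ is statistically closed if $\overline{F}^{ST}=F$. A topological space is statistically compact if every nonthin sequence in it has a nonthin subsequence that is statistically convergent to some point of the space; a subset is statistically compact if it is so in the subspace topology. *)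

(* Defs.v *)
From HB Require Import structures.
From mathcomp Require Import all_boot all_order all_algebra.
From mathcomp Require Import all_classical all_reals all_analysis.
From mathcomp Require Import Rstruct Rstruct_topology.
From Stdlib Require Import Rdefinitions.
Set Implicit Arguments. Unset Strict Implicit. Unset Printing Implicit Defensive.
Import Order.TTheory GRing.Theory Num.Theory.
Local Open Scope classical_set_scope.
Local Open Scope ring_scope.

Definition dn (A : set nat) (n : nat) : Rdefinitions.R :=
  (\sum_(1 <= k < n.+1) (\1_A k : Rdefinitions.R)) / n%:R.

Definition upper_density (A : set nat) : \bar Rdefinitions.R :=
  limn_esup (fun n => (dn A n)%:E).

Definition density_zero (A : set nat) : Prop := dn A @ \oo --> (0 : Rdefinitions.R).

Definition nonthin (M : set nat) : Prop := (0 < upper_density M)%E.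

Definition stat_conv_wrt {X : Type} (opens : set (set X))
    (M : set nat) (x : nat -> X) (a : X) : Prop :=
  nonthin M /\
  forall U, opens U -> U a -> density_zero [set n | M n /\ ~ U (x n)].

Definition stat_conv {X : topologicalType} (M : set nat) (x : nat -> X) (a : X) :=
  stat_conv_wrt open M x a.

Definition subseq_idx (N M : set nat) : Prop := N `<=` M /\ infinite_set N.

Definition subspace_opens {X : topologicalType} (C : set X) : set (set X) :=
  [set U | exists V, open V /\ U = V `&` C].

Definition stat_compact_set {X : topologicalType} (C : set X) : Prop :=
  forall (M : set nat) (x : nat -> X),
    infinite_set M -> (forall n, M n -> C (x n)) -> nonthin M ->
    exists N, subseq_idx N M /\ nonthin N /\
      exists a, C a /\ stat_conv_wrt (subspace_opens C) N x a.

Definition stat_closure {X : topologicalType} (F : set X) : set X :=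
  [set a | exists (M : set nat) (x : nat -> X),
     infinite_set M /\ (forall n, M n -> F (x n)) /\ nonthin M /\ stat_conv M x a].

Definition stat_closed {X : topologicalType} (F : set X) : Prop :=
  stat_closure F = F.

Definition escape_property {X : topologicalType} (C : set X) : Prop :=
  forall (M : set nat) (x : nat -> X),
    infinite_set M -> nonthin M ->
    ~ (exists N, subseq_idx N M /\ nonthin N /\ exists a, stat_conv N x a) ->
    exists N, N `<=` M /\ density_zero N /\
      forall n, M n -> ~ N n -> ~ C (x n).

(* Main.v *)
Require Import Defs.
From HB Require Import structures.
From mathcomp Require Import all_boot all_order all_algebra.
From mathcomp Require Import all_classical all_reals all_analysis.
From mathcomp Require Import Rstruct Rstruct_topology.
Set Implicit Arguments.
Import Order.TTheory GRing.Theory Num.Theory.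
Local Open Scope classical_set_scope.
Local Open Scope ring_scope.

Lemma dn_ge0 A n : 0 <= dn A n.
Proof.
rewrite /dn divr_ge0 //; apply: sumr_ge0 => k _; by rewrite indicE.
Qed.

Lemma dz_upper A : density_zero A -> upper_density A = 0%E.
Proof.
move=> h; rewrite /upper_density.
have : (fun n => (dn A n)%:E) @ \oo --> (0:Rdefinitions.R)%:E.
  by apply: cvg_EFin; [exact: nearW | exact: h].
by move=> /cvg_limn_einf_sup [].
Qed.

Lemma upper_dz A : (upper_density A <= 0)%E -> density_zero A.
Proof.
move=> h; rewrite /density_zero.
have : (fun n => (dn A n)%:E) @ \oo --> (0:Rdefinitions.R)%:E.
  apply: limn_esup_le_cvg => // n; rewrite lee_fin; exact: dn_ge0.
by move=> /fine_cvgP [].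
Qed.

Lemma not_dz_nonthin A : ~ density_zero A -> nonthin A.
Proof.
move=> h; rewrite /nonthin; rewrite ltNge; apply/negP => /upper_dz; exact: h.
Qed.

Lemma dz_not_nonthin A : density_zero A -> ~ nonthin A.
Proof. by move=> /dz_upper; rewrite /nonthin => ->; rewrite ltxx. Qed.

Lemma bounded_dz A K : (forall k, A k -> (k < K)%N) -> density_zero A.
Proof.
move=> hK.
pose c : Rdefinitions.R := \sum_(1 <= k < K.+1) (\1_A k : Rdefinitions.R).
rewrite /density_zero.
apply: cvg_trans; first apply: (near_eq_cvg (f := fun n => c / n%:R)).
  near=> n; apply/esym.
  rewrite /dn /c (@big_cat_nat _ _ _ K.+1 1 n.+1) //=; last first.
    by rewrite ltnS; near: n; exists K.
  rewrite [X in _ + X]big_nat_cond [X in _ + X]big1 ?addr0 // => k /andP[/andP[Kk _] _].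
  by rewrite indicE memNset // => /hK; rewrite ltnNge (ltnW Kk).
rewrite -cvg_shiftS /=.
have -> : (fun n : nat => c / n.+1%:R) = (fun n => c * harmonic n) by [].
have h := cvgMl_tmp (a := c) (@cvg_harmonic Rdefinitions.R).
rewrite mulr0 in h. exact: h.
Unshelve. all: by end_near.
Qed.

Lemma finite_bounded (A : set nat) : finite_set A -> exists K, forall k, A k -> (k < K)%N.
Proof.
move=> fA; exists (\max_(i <- finmap.enum_fset (fset_set A)) i).+1 => k Ak.
rewrite ltnS; apply: (@leq_bigmax_seq _ _ xpredT id) => //.
by rewrite in_fset_set // mem_set.
Qed.

Theorem mainTheorem16 (X : topologicalType) (C : set X) :
  (stat_compact_set C -> escape_property C) /\
  (stat_closed C -> escape_property C -> stat_compact_set C).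
Proof.
split.
- move=> hc M x Minf Mnt hno.
  pose N := [set n | M n /\ C (x n)].
  exists N; split; first by move=> n [].
  split; last by move=> n Mn nN Cx; apply: nN.
  have [//|ndz] := pselect (density_zero N).
  have Nnt := not_dz_nonthin ndz.
  have Ninf : infinite_set N.
    move=> /finite_bounded [K hK].
    exact: (dz_not_nonthin (@bounded_dz N K hK) Nnt).
  have [N' [[N'N N'inf] [N'nt [a [Ca [_ hconv]]]]]] :=
    hc N x Ninf (fun n hn => proj2 hn) Nnt.
  exfalso; apply: hno; exists N'; split.
    by split => // n /N'N [].
  split => //; exists a; split => // U oU Ua.
  have := hconv (U `&` C) (ex_intro _ U (conj oU erefl)) (conj Ua Ca).
  congr density_zero; apply/seteqP; split => n [Nn h]; split => //.
  + by move=> Ux; apply: h; split => //; have [] := N'N n Nn.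
  + by move=> [Ux _]; apply: h.
- move=> hcl hesc M x Minf MC Mnt.
  have [[N [[NM Ninf] [Nnt [a [Nnt' hconv]]]]]|hno] :=
    pselect (exists N, subseq_idx N M /\ nonthin N /\ exists a, stat_conv N x a).
    exists N; split => //; split => //; exists a; split.
      rewrite -hcl; exists N, x; split => //; split.
        by move=> n Nn; apply: MC; apply: NM.
      by split => //; split.
    split => // U [V [oV ->]] [Va Ca].
    have := hconv V oV Va.
    congr density_zero; apply/seteqP; split => n [Nn h]; split => //.
    + by move=> [Vx _]; apply: h.
    + by move=> Vx; apply: h; split => //; apply: MC; apply: NM.
  have [N [NM [Ndz hN]]] := hesc M x Minf Mnt hno.
  exfalso; apply: (dz_not_nonthin Ndz).
  suff <- : M = N by [].
  apply/seteqP; split => // n Mn.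
  have [//|nN] := pselect (N n).
  by case: (hN n Mn nN (MC n Mn)).
Qed.
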